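(* Let $V$ be a finite-dimensional real vector space with a non-degenerate inner product of signature $(p,q)$, $p,q\ge1$, $p+q\ge3$; let $Q(v)=(v,v)$ and $\mathcal{I}=Q\cdot\mathbb{R}[V,\mathbb{R}]$. Let $W$ be a finite-dimensional real vector space of dimension $w$ and $r\le w$. Let $\Delta$ be an $\mathbb{R}[V,\mathbb{R}]$-submodule of $\mathbb{R}[V,W]$ such that $Q\cdot x\in\Delta$ implies $x\in\Delta$. If there exist $x_1,\dots,x_r\in\Delta$ with $I(x_1,\dots,x_r)\ne\{0\}$, then there exist $x_1,\dots,x_r\in\Delta$ with $k(x_1,\dots,x_r)=0$, i.e. with $I(x_1,\dots,x_r)\not\subset\mathcal{I}$.
   Context: $\mathbb{R}[V,\mathbb{R}]$ is the ring of real polynomial functions on $V$ and $\mathbb{R}[V,W]$ the module of polynomial maps $V\to W$. For $x_1,\dots,x_r\in\mathbb{R}[V,W]$ and a basis of $W$, $I(x_1,\dots,x_r)$ is the ideal generated by all $r\times r$ minors of the $w\times r$ matrix whose $i$-th column is the coordinate vector of $x_i$ (independent of basis). If $I(x_1,\dots,x_r)\neq\{0\}$, $k(x_1,\dots,x_r)$ is the smallest integer $k\ge0$ with $I(x_1,\dots,x_r)\not\subset\mathcal{I}^{k+1}$. *)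

(* Defs.v *)
From HB Require Import structures.
From mathcomp Require Import all_boot all_algebra.
From mathcomp Require Import reals.
From mathcomp Require Import mpoly.

Set Implicit Arguments.
Unset Strict Implicit.
Unset Printing Implicit Defensive.

Import GRing.Theory.
Local Open Scope ring_scope.

(* V = R^n (row vectors); a symmetric bilinear form on V is a symmetric
   matrix B : 'M[R]_n, (u,v) = u B v^T. *)

Definition std_sig (R : ringType) (p q : nat) : 'M[R]_(p + q) :=
  diag_mx (\row_(i < p + q) (if (i < p)%N then 1 else -1)).

(* B is a non-degenerate symmetric form of signature (p,q): there is a
   basis (rows of an invertible P) in which B has matrix std_sig p q. *)
Definition has_signature (R : realType) (p q : nat) (B : 'M[R]_(p + q)) : Prop :=
  B^T = B /\ exists P : 'M[R]_(p + q), P \in unitmx /\ P *m B *m P^T = std_sig R p q.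

Definition quad_poly (R : realType) (n : nat) (B : 'M[R]_n) : {mpoly R[n]} :=
  \sum_(i < n) \sum_(j < n) B i j *: ('X_i * 'X_j).

(* Polynomial maps V -> W, W of dimension w with a fixed basis: column
   vectors of coordinate polynomials, i.e. elements of R[V,R]^w. *)
Definition polymap (R : realType) (n w : nat) := 'cV[{mpoly R[n]}]_w.

Definition is_submodule (R : realType) (n w : nat) (D : polymap R n w -> Prop) : Prop :=
  [/\ D 0,
      forall x y, D x -> D y -> D (x + y)
    & forall (f : {mpoly R[n]}) x, D x -> D (map_mx (fun c => f * c) x)].

Definition minor (R : realType) (n w r : nat) (M : 'M[{mpoly R[n]}]_(w, r))
  (f : {ffun 'I_r -> 'I_w}) : {mpoly R[n]} := \det (rowsub f M).

(* g belongs to the ideal I(x_1,...,x_r) generated by all r x r minors of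
   the matrix M whose i-th column is x_i. *)
Definition in_minor_ideal (R : realType) (n w r : nat) (M : 'M[{mpoly R[n]}]_(w, r))
  (g : {mpoly R[n]}) : Prop :=
  exists c : {ffun 'I_r -> 'I_w} -> {mpoly R[n]},
    g = \sum_(f : {ffun 'I_r -> 'I_w}) c f * minor M f.

Definition in_Qideal (R : realType) (n : nat) (Q g : {mpoly R[n]}) : Prop :=
  exists h : {mpoly R[n]}, g = Q * h.

(* Main.v *)
Require Import Defs.
From HB Require Import structures.
From mathcomp Require Import all_boot all_algebra.
From mathcomp Require Import all_order all_fingroup.
From mathcomp Require Import reals.
From mathcomp Require Import mpoly.
From Stdlib Require Import Classical.
From mathcomp Require Import ring.
Set Implicit Arguments.
Unset Strict Implicit.
Unset Printing Implicit Defensive.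
Import GRing.Theory Num.Theory Order.TTheory.
Local Open Scope ring_scope.

Definition dvQ (D : comRingType) (Q x : D) := exists h, x = Q * h.

Lemma dvQ0 (D : comRingType) (Q : D) : dvQ Q 0.
Proof. by exists 0; rewrite mulr0. Qed.
Lemma dvQD (D : comRingType) (Q x y : D) : dvQ Q x -> dvQ Q y -> dvQ Q (x + y).
Proof. by move=> [a ->] [b ->]; exists (a + b); rewrite mulrDr. Qed.
Lemma dvQMl (D : comRingType) (Q a x : D) : dvQ Q x -> dvQ Q (a * x).
Proof. by move=> [b ->]; exists (a * b); rewrite mulrCA. Qed.
Lemma dvQMr (D : comRingType) (Q a x : D) : dvQ Q x -> dvQ Q (x * a).
Proof. by rewrite mulrC; apply: dvQMl. Qed.
Lemma dvQ_sum (D : comRingType) (Q : D) (I : Type) (s : seq I) (P : pred I) F :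
  (forall i, P i -> dvQ Q (F i)) -> dvQ Q (\sum_(i <- s | P i) F i).
Proof. by move=> H; apply: big_ind => //; [exact: dvQ0 | exact: dvQD]. Qed.

Definition repl (D : comRingType) (n : nat) (A : 'M[D]_n) (j : 'I_n) (v : 'I_n -> D) : 'M[D]_n :=
  \matrix_(i, c) if c == j then v i else A i c.

Lemma cofactor_repl (D : comRingType) n (A : 'M[D]_n) j v i :
  cofactor (repl A j v) i j = cofactor A i j.
Proof.
rewrite /cofactor; congr (_ * \det _); apply/matrixP => k l.
by rewrite !mxE eq_sym (negbTE (neq_lift j l)).
Qed.

Lemma det_repl (D : comRingType) n (A : 'M[D]_n) j v :
  \det (repl A j v) = \sum_i v i * cofactor A i j.
Proof.
rewrite (expand_det_col _ j); apply: eq_bigr => i _.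
by rewrite cofactor_repl mxE eqxx.
Qed.

Lemma sum_cof (D : comRingType) n (A : 'M[D]_n) j c :
  \sum_i A i c * cofactor A i j = if c == j then \det A else 0.
Proof.
rewrite -(det_repl A j (fun i => A i c)).
case: eqP => [->|/eqP ne].
  by congr (\det _); apply/matrixP => i k; rewrite mxE; case: eqP => [->|].
rewrite -det_tr; apply: (@determinant_alternate _ _ _ j c); first by rewrite eq_sym.
by move=> l; rewrite !mxE eqxx (negbTE ne).
Qed.

Lemma sign_rr (D : comRingType) (r : nat) : (-1) ^+ (r + r) = 1 :> D.
Proof. by rewrite addnn -mul2n exprM sqrrN !expr1n. Qed.

Lemma dep_lemma (D : comRingType) (Q : D) (w r : nat) (M : 'M[D]_(w, r)) :
  ~ dvQ Q 1 -> (forall g : 'I_r -> 'I_w, dvQ Q (\det (rowsub g M))) ->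
  exists a : 'I_r -> D, exists j, ~ dvQ Q (a j) /\ forall i, dvQ Q (\sum_c a c * M i c).
Proof.
elim: r M => [|r IH] M nQ1 Hm.
  have g : 'I_0 -> 'I_w by case.
  by exfalso; apply: nQ1; have := Hm g; rewrite det_mx00.
pose M0 : 'M[D]_(w, r) := col' ord_max M.
have [Hall|Hnot] := classic (forall g : 'I_r -> 'I_w, dvQ Q (\det (rowsub g M0))).
  have [a0 [j0 [Hj0 Hs]]] := IH M0 nQ1 Hall.
  exists (fun c => if unlift ord_max c is Some c' then a0 c' else 0), (lift ord_max j0).
  rewrite liftK; split => // i.
  rewrite (bigD1_ord ord_max) //= unlift_none mul0r add0r.
  have := Hs i; congr dvQ; apply: eq_bigr => c _.
  by rewrite liftK /M0 mxE.
have [g0 Hg0] : exists g0 : 'I_r -> 'I_w, ~ dvQ Q (\det (rowsub g0 M0)).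
  by apply: NNPP => H; apply: Hnot => g; apply: NNPP => H'; apply: H; exists g.
exists (fun c : 'I_r.+1 => (-1) ^+ (r + c) * \det (col' c (rowsub g0 M))), ord_max.
split.
  rewrite /= sign_rr mul1r; move: Hg0; congr (~ dvQ _ (\det _)).
  by apply/matrixP => k l; rewrite !mxE.
move=> i.
pose g : 'I_r.+1 -> 'I_w := fun k => if unlift ord_max k is Some k' then g0 k' else i.
have := Hm g; rewrite (expand_det_row _ ord_max); congr dvQ.
apply: eq_bigr => c _; rewrite mulrC /cofactor !mxE /g unlift_none.
congr (_ * _ * _); congr (\det _).
by apply/matrixP => k l; rewrite !mxE liftK.
Qed.

Lemma minor_fun (R : realType) n w r (M : 'M[{mpoly R[n]}]_(w, r)) (g : 'I_r -> 'I_w) :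
  minor M [ffun k => g k] = \det (rowsub g M).
Proof. by rewrite /minor; congr (\det _); apply/matrixP => k l; rewrite !mxE ffunE. Qed.

Lemma sub_sum (R : realType) n w (Delta : polymap R n w -> Prop) (I : Type) (s : seq I) (P : pred I) F :
  is_submodule Delta -> (forall i, P i -> Delta (F i)) -> Delta (\sum_(i <- s | P i) F i).
Proof. by move=> [H0 HD _] H; apply: big_ind. Qed.

Lemma descent (R : realType) n w r (Delta : polymap R n w -> Prop) (Q : {mpoly R[n]}) :
  Q != 0 -> ~ dvQ Q 1 -> (forall a b, dvQ Q (a * b) -> dvQ Q a \/ dvQ Q b) ->
  is_submodule Delta ->
  (forall x : polymap R n w, Delta (map_mx (fun c => Q * c) x) -> Delta x) ->
  forall m (M : 'M[{mpoly R[n]}]_(w, r)) h (cf : {ffun 'I_r -> 'I_w} -> {mpoly R[n]}),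
  (forall i, Delta (col i M)) -> \sum_f cf f * minor M f = Q ^+ m * h -> ~ dvQ Q h ->
  exists M' : 'M[{mpoly R[n]}]_(w, r), (forall i, Delta (col i M')) /\
     exists g, in_minor_ideal M' g /\ ~ in_Qideal Q g.
Proof.
move=> Q0 nQ1 Qprime Hsub HQ m; elim: m => [|m IH] M h cf HM Hg Hh.
  by exists M; split => //; exists h; split => //; exists cf; rewrite Hg expr0 mul1r.
have [[f Hf]|Hall] := classic (exists f, ~ dvQ Q (minor M f)).
  exists M; split => //; exists (minor M f); split => //.
  exists (fun f' => if f' == f then 1 else 0).
  rewrite (bigD1 f) //= eqxx mul1r big1 ?addr0 // => f' /negbTE ->; exact: mul0r.
have Hall' : forall g : 'I_r -> 'I_w, dvQ Q (\det (rowsub g M)).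
  move=> g; rewrite -minor_fun; apply: NNPP => H; apply: Hall; by exists [ffun k => g k].
have [a [j [Haj Hs]]] := dep_lemma nQ1 Hall'.
have [y Hy] := fin_all_exists Hs.
pose M' : 'M[{mpoly R[n]}]_(w, r) := \matrix_(i, c) if c == j then y i else M i c.
have HM' : forall c, Delta (col c M').
  move=> c; have [->|ne] := eqVneq c j; last first.
    suff -> : col c M' = col c M by [].
    by apply/matrixP => i k; rewrite !mxE (negbTE ne).
  apply: HQ.
  have -> : map_mx (fun c0 => Q * c0) (col j M') = \sum_c map_mx (fun c0 => a c * c0) (col c M).
    apply/matrixP => i k; rewrite summxE !mxE eqxx -Hy.
    by apply: eq_bigr => c1 _; rewrite !mxE.
  apply: sub_sum => // c1 _; case: Hsub => _ _; apply; exact: HM.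
have Hmin : forall f, Q * minor M' f = a j * minor M f.
  move=> f; rewrite /minor.
  have -> : rowsub f M' = repl (rowsub f M) j (fun i => y (f i)).
    by apply/matrixP => k l; rewrite !mxE.
  rewrite det_repl mulr_sumr.
  under eq_bigr => i _ do rewrite mulrA -Hy mulr_suml.
  rewrite exchange_big /=.
  under eq_bigr => c _ do (under eq_bigr => i _ do rewrite -mulrA; rewrite -mulr_sumr).
  rewrite [LHS](bigD1 j) //= [X in _ + X]big1 ?addr0.
    congr (_ * _); have := sum_cof (rowsub f M) j j; rewrite eqxx => <-.
    by apply: eq_bigr => i _; rewrite mxE.
  move=> c /negbTE ne; have := sum_cof (rowsub f M) j c; rewrite ne => H.
  rewrite -[X in _ = X](mulr0 (a c)) -[X in _ = _ * X]H; congr (_ * _).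
  by apply: eq_bigr => i _; rewrite mxE.
apply: (IH M' (a j * h) cf HM').
  apply: (mulfI Q0); rewrite mulr_sumr.
  under eq_bigr => f _ do rewrite mulrCA Hmin mulrCA.
  by rewrite -mulr_sumr Hg exprS; ring.
by move=> /Qprime [].
Qed.

Lemma msizeQ (R : realType) n (Q : {mpoly R[n]}) : Q != 0 -> ~ dvQ Q 1 -> (2 <= msize Q)%N.
Proof.
move=> Q0 nQ1; rewrite leqNgt; apply/negP => H.
have HQ : Q = (Q@_0)%:MP by apply: msize1_polyC; rewrite -ltnS.
apply: nQ1; exists (Q@_0)^-1%:MP.
have c0 : Q@_0 != 0 by apply: contraNneq Q0 => e; rewrite HQ e.
by rewrite [X in X * _]HQ -mpolyCM mulfV.
Qed.

Lemma decomp (R : realType) n (Q g : {mpoly R[n]}) :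
  Q != 0 -> ~ dvQ Q 1 -> g != 0 -> exists m h, g = Q ^+ m * h /\ ~ dvQ Q h.
Proof.
move=> Q0 nQ1; have HQ := msizeQ Q0 nQ1.
move: {2}(msize g) (erefl (msize g)) => k; elim/ltn_ind: k g => k IH g Hk g0.
have [Hd|Hnd] := classic (dvQ Q g); last by exists 0%N, g; rewrite expr0 mul1r.
case: Hd => h' Hg; have h0 : h' != 0 by apply: contraNneq g0 => h0; rewrite Hg h0 mulr0.
have Hlt : (msize h' < k)%N.
  rewrite -Hk Hg msizeM //; move: HQ; case: (msize Q) => [|[|s]] //= _.
  by rewrite !addSn /= ltnS leq_addl.
have [m [h [Hh' Hh]]] := IH _ Hlt h' erefl h0.
by exists m.+1, h; rewrite Hg Hh' exprS mulrA.
Qed.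

Lemma main_from_facts (R : realType) n (Q : {mpoly R[n]}) w r (Delta : polymap R n w -> Prop) :
  Q != 0 -> ~ dvQ Q 1 -> (forall a b, dvQ Q (a * b) -> dvQ Q a \/ dvQ Q b) ->
  is_submodule Delta ->
  (forall x : polymap R n w, Delta (map_mx (fun c => Q * c) x) -> Delta x) ->
  (exists M : 'M[{mpoly R[n]}]_(w, r),
      (forall i : 'I_r, Delta (col i M)) /\
      exists g, in_minor_ideal M g /\ g != 0) ->
  exists M : 'M[{mpoly R[n]}]_(w, r),
    (forall i : 'I_r, Delta (col i M)) /\
    exists g, in_minor_ideal M g /\ ~ in_Qideal Q g.
Proof.
move=> Q0 nQ1 Qp Hsub HQ [M [HM [g [[cf Hg] g0]]]].
have [m [h [Hgh Hh]]] := decomp Q0 nQ1 g0.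
apply: (descent Q0 nQ1 Qp Hsub HQ (m := m) (M := M) (h := h) (cf := cf)) => //.
by rewrite -Hg.
Qed.

Lemma size2_form (A : nzRingType) (p : {poly A}) : (size p <= 2)%N -> p = (p`_1)%:P * 'X + (p`_0)%:P.
Proof.
move=> Hs; apply/polyP => j; rewrite coefD coefCM coefX coefC.
case: j => [|[|j]] /=; rewrite ?mulr0 ?mulr1 ?add0r ?addr0 //.
by apply: nth_default; apply: leq_trans Hs _.
Qed.

Lemma d_mul_small (A : idomainType) (c : A) (t : {poly A}) :
  (size (('X^2 - c%:P) * t)%R <= 2)%N -> t = 0.
Proof.
have md : 'X^2 - c%:P \is monic by apply: monicXnsubC.
apply: contraTeq => t0; rewrite mulrC size_Mmonic // size_XnsubC //.
rewrite -ltnNge addn3 /= ltnS ltnS lt0n size_poly_eq0.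
exact: t0.
Qed.

Lemma lin_size (A : nzRingType) (e1 e0 : A) : (size (e1%:P * 'X + e0%:P)%R <= 2)%N.
Proof.
apply/leq_sizeP => j Hj; rewrite coefD coefCM coefX coefC.
by case: j Hj => [|[|j]] //= _; rewrite mulr0 addr0.
Qed.

Lemma poly_prime (A : idomainType) (c : A) :
  (forall a0 a1 : A, a0 * a0 = a1 * a1 * c -> a1 = 0) ->
  forall f g : {poly A}, (exists k, f * g = ('X^2 - c%:P) * k) ->
  (exists k, f = ('X^2 - c%:P) * k) \/ (exists k, g = ('X^2 - c%:P) * k).
Proof.
move=> Hc f g [k Hk].
set d := 'X^2 - c%:P in Hk *.
have md : d \is monic by apply: monicXnsubC.
have d0 : d != 0 by apply: monic_neq0.
have sd : size d = 3 by rewrite size_XnsubC.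
have Ef := Pdiv.RingMonic.rdivp_eq md f; have Eg := Pdiv.RingMonic.rdivp_eq md g.
move: Ef Eg.
set fq := Pdiv.CommonRing.rdivp f d; set fr := Pdiv.CommonRing.rmodp f d.
set gq := Pdiv.CommonRing.rdivp g d; set gr := Pdiv.CommonRing.rmodp g d => Ef Eg.
have sfr : (size fr <= 2)%N by have := Pdiv.Ring.ltn_rmodpN0 f d0; rewrite sd.
have sgr : (size gr <= 2)%N by have := Pdiv.Ring.ltn_rmodpN0 g d0; rewrite sd.
have Ffr := size2_form sfr; have Fgr := size2_form sgr.
move: Ffr Fgr; set a0 := fr`_0; set a1 := fr`_1; set h0 := gr`_0; set h1 := gr`_1 => Ffr Fgr.
have He : ((a1 * h0 + a0 * h1)%:P * 'X + (a0 * h0 + a1 * h1 * c)%:P)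
   = d * (k - (fq * gq * d + fq * gr + fr * gq) - (a1 * h1)%:P).
  rewrite mulrBr mulrBr -Hk Ef Eg Ffr Fgr /d !rmorphD !rmorphM /=; ring.
have t0 := d_mul_small (c := c) (t := k - (fq * gq * d + fq * gr + fr * gq) - (a1 * h1)%:P).
rewrite -/d -He lin_size in t0; have {t0}t0 := t0 isT.
move: He; rewrite t0 mulr0 => He.
have E1 : a1 * h0 + a0 * h1 = 0.
  by have := congr1 (fun p : {poly A} => p`_1) He; rewrite /= coefD coefCM coefX coefC coef0 mulr1 addr0.
have E0 : a0 * h0 + a1 * h1 * c = 0.
  by have := congr1 (fun p : {poly A} => p`_0) He; rewrite /= coefD coefCM coefX coefC coef0 mulr0 add0r.
have [Hz|Hnz] := eqVneq (a0 * a0 - a1 * a1 * c) 0.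
  have a10 : a1 = 0 by apply: (Hc a0); apply/eqP; rewrite -subr_eq0 Hz.
  have a00 : a0 = 0.
    have : a0 * a0 = 0 by move: Hz; rewrite a10 !mul0r subr0.
    by move/eqP; rewrite mulf_eq0 orbb => /eqP.
  by left; exists fq; rewrite Ef Ffr a10 a00 !mul0r add0r addr0 mulrC.
have h00 : h0 = 0.
  apply: (mulfI Hnz); rewrite mulr0; transitivity (a0 * (a0 * h0 + a1 * h1 * c) - a1 * c * (a1 * h0 + a0 * h1)); first by ring.
  by rewrite E0 E1 !mulr0 subr0.
have h10 : h1 = 0.
  apply: (mulfI Hnz); rewrite mulr0; transitivity (a0 * (a1 * h0 + a0 * h1) - a1 * (a0 * h0 + a1 * h1 * c)); first by ring.
  by rewrite E0 E1 !mulr0 subr0.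
right; exists gq; rewrite Eg Fgr h00 h10 mulrC.
by rewrite !raddf0 mul0r !addr0.
Qed.

Lemma poly_not_unit (A : idomainType) (c : A) :
  ~ exists k : {poly A}, 1 = ('X^2 - c%:P) * k.
Proof.
move=> [k Hk]; have := d_mul_small (c := c) (t := k); rewrite -Hk size_poly1 => /(_ isT) k0.
by move: Hk; rewrite k0 mulr0 => /eqP; rewrite oner_eq0.
Qed.

Lemma cU2_coef (R : realType) k (w : 'I_k -> R) (m : 'X_{1..k}) :
  (\sum_j w j *: 'X_[(U_(j) + U_(j))%MM] : {mpoly R[k]})@_m
  = \sum_j w j * ((U_(j) + U_(j))%MM == m)%:R.
Proof.
rewrite (raddf_sum (mcoeff m)); apply: eq_bigr => j _.
set t := (U_(j) + U_(j))%MM.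
change (mcoeff m (w j *: 'X_[t]) = w j * (t == m)%:R).
by rewrite mcoeffZ mcoeffX.
Qed.

Lemma U2_inj k (i j : 'I_k) : ((U_(i) + U_(i))%MM == (U_(j) + U_(j))%MM) = (i == j).
Proof.
apply/eqP/eqP => [H|->] //; have := congr1 (fun m : 'X_{1..k} => m i) H.
rewrite !mnmDE !mnm1E eqxx; case: eqP => //.
Qed.

Lemma sign_lemma (R : realType) k (w : 'I_k.+1 -> R) : w ord0 < 0 ->
  forall a0 a1 : {mpoly R[k.+1]},
  a0 * a0 = a1 * a1 * (\sum_j w j *: 'X_[(U_(j) + U_(j))%MM]) -> a1 = 0.
Proof.
move=> w0 a0 a1; set c := \sum_j _.
have Hc0 : c@_(U_(ord0) + U_(ord0))%MM = w ord0.
  rewrite cU2_coef (bigD1 ord0) //= eqxx mulr1 big1 ?addr0 // => j /negbTE.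
  by rewrite U2_inj => ->; rewrite mulr0.
have c0 : c != 0.
  by apply: contraTneq w0 => c0'; move: Hc0; rewrite c0' mcoeff0 => <-; rewrite ltxx.
have Hlead : mlead c = (U_(ord0) + U_(ord0))%MM.
  apply: le_anti; apply/andP; split; last first.
    by apply: msupp_le_mlead; rewrite mcoeff_msupp Hc0 lt_eqF.
  have := mlead_supp c0; rewrite mcoeff_msupp cU2_coef.
  have [j /eqP Hj|Hno] := pickP (fun j : 'I_k.+1 => (U_(j) + U_(j))%MM == mlead c); last first.
    by rewrite big1 ?eqxx // => j _; rewrite Hno mulr0.
  move=> _; rewrite -Hj; have [->|nej] := eqVneq j ord0; first by [].
  apply: ltW; apply/ltmcP; first by rewrite !mdegD !mdeg1.
  exists ord0 => [l|]; first by rewrite ltn0.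
  by rewrite !mnmDE !mnm1E eqxx (negbTE nej).
move=> E; apply: contraTeq isT => a10.
have a00 : a0 != 0.
  apply: contraNneq (mulf_neq0 (mulf_neq0 a10 a10) c0) => a00.
  by rewrite -E a00 mulr0.
have := congr1 (fun p : {mpoly R[k.+1]} => p@_(mlead p)) E.
rewrite /= !mleadM ?mulf_neq0 // -[(mlead a1 + mlead a1)%MM]mleadM // !mleadcM.
have -> : mleadc (a1 * a1) = mleadc a1 * mleadc a1 by rewrite mleadM // mleadcM.
rewrite Hlead Hc0.
set x := mleadc a0; set y := mleadc a1.
have y0 : y != 0 by rewrite mleadc_eq0.
move=> Exy; have : 0 < y * y by rewrite lt0r mulf_neq0 //= -expr2 sqr_ge0.
have : 0 <= x * x by rewrite -expr2 sqr_ge0.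
rewrite Exy => h1 h2; have : y * y * w ord0 < 0 by rewrite pmulr_rlt0.
by rewrite ltNge h1.
Qed.

Definition Yv (R : realType) k (j : 'I_k.+1) : {poly {mpoly R[k]}} :=
  if unlift ord0 j is Some j' then ('X_j')%:P else 'X.
Definition Lv (R : realType) k (M : 'M[R]_k.+1) (i : 'I_k.+1) : {poly {mpoly R[k]}} :=
  \sum_j (M j i)%:MP%:P * Yv R j.
Definition Phi (R : realType) k (M : 'M[R]_k.+1) (p : {mpoly R[k.+1]}) : {poly {mpoly R[k]}} :=
  mmap (polyC \o (@mpolyC k R)) (Lv M) p.
Definition Zv (R : realType) k (Minv : 'M[R]_k.+1) (j : 'I_k.+1) : {mpoly R[k.+1]} :=
  \sum_l Minv l j *: 'X_l.
Definition Tv (R : realType) k (Minv : 'M[R]_k.+1) : k.-tuple {mpoly R[k.+1]} :=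
  [tuple Zv Minv (lift ord0 j) | j < k].
Definition Psi (R : realType) k (Minv : 'M[R]_k.+1) (P : {poly {mpoly R[k]}}) : {mpoly R[k.+1]} :=
  (map_poly (comp_mpoly (Tv Minv)) P).[Zv Minv ord0].

Lemma PhiM (R : realType) k (M : 'M[R]_k.+1) p q : Phi M (p * q) = Phi M p * Phi M q.
Proof. exact: rmorphM. Qed.
Lemma Phi1 (R : realType) k (M : 'M[R]_k.+1) : Phi M 1 = 1.
Proof. exact: rmorph1. Qed.
Lemma PhiD (R : realType) k (M : 'M[R]_k.+1) p q : Phi M (p + q) = Phi M p + Phi M q.
Proof. exact: rmorphD. Qed.
Lemma PhiZ (R : realType) k (M : 'M[R]_k.+1) c p : Phi M (c *: p) = c%:MP%:P * Phi M p.
Proof. exact: mmapZ. Qed.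
Lemma PhiX (R : realType) k (M : 'M[R]_k.+1) i : Phi M 'X_i = Lv M i.
Proof. by rewrite /Phi mmapX mmap1U. Qed.

Lemma PsiM (R : realType) k (Minv : 'M[R]_k.+1) P Q : Psi Minv (P * Q) = Psi Minv P * Psi Minv Q.
Proof. by rewrite /Psi rmorphM hornerM. Qed.
Lemma PsiD (R : realType) k (Minv : 'M[R]_k.+1) P Q : Psi Minv (P + Q) = Psi Minv P + Psi Minv Q.
Proof. by rewrite /Psi rmorphD hornerD. Qed.
Lemma Psi0 (R : realType) k (Minv : 'M[R]_k.+1) : Psi Minv 0 = 0.
Proof. by rewrite /Psi rmorph0 horner0. Qed.
Lemma PsiC (R : realType) k (Minv : 'M[R]_k.+1) c : Psi Minv c%:MP%:P = c%:MP.
Proof. by rewrite /Psi map_polyC hornerC; apply: comp_mpolyC. Qed.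
Lemma PsiY (R : realType) k (Minv : 'M[R]_k.+1) j : Psi Minv (Yv R j) = Zv Minv j.
Proof.
rewrite /Yv; case: unliftP => [j' ->|->].
  rewrite /Psi map_polyC hornerC; rewrite [LHS]comp_mpolyXU.
  by rewrite -(tnth_nth 0) tnth_mktuple.
by rewrite /Psi (map_polyX (comp_mpoly (Tv Minv))) hornerX.
Qed.

Lemma Psi1 (R : realType) k (Minv : 'M[R]_k.+1) : Psi Minv 1 = 1.
Proof. by rewrite /Psi rmorph1 hornerC. Qed.
Lemma Psi_sum (R : realType) k (Minv : 'M[R]_k.+1) (I : Type) (r : seq I) (P : pred I) F :
  Psi Minv (\sum_(i <- r | P i) F i) = \sum_(i <- r | P i) Psi Minv (F i).
Proof. exact: (big_morph _ (PsiD Minv) (Psi0 Minv)). Qed.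
Lemma Psi_prod (R : realType) k (Minv : 'M[R]_k.+1) (I : Type) (r : seq I) (P : pred I) F :
  Psi Minv (\prod_(i <- r | P i) F i) = \prod_(i <- r | P i) Psi Minv (F i).
Proof. exact: (big_morph _ (PsiM Minv) (Psi1 Minv)). Qed.
Lemma PsiXn (R : realType) k (Minv : 'M[R]_k.+1) P n : Psi Minv (P ^+ n) = Psi Minv P ^+ n.
Proof. by elim: n => [|n IH]; rewrite ?expr0 ?Psi1 // !exprS PsiM IH. Qed.

Lemma PsiL (R : realType) k (M Minv : 'M[R]_k.+1) : Minv *m M = 1%:M ->
  forall i, Psi Minv (Lv M i) = 'X_i.
Proof.
move=> HM i; rewrite /Lv Psi_sum.
under eq_bigr => j _ do rewrite PsiM PsiC PsiY mul_mpolyC /Zv scaler_sumr.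
rewrite exchange_big /=.
under eq_bigr => l _ do (under eq_bigr => j _ do rewrite scalerA; rewrite -scaler_suml).
have HMM : forall l, \sum_j M j i * Minv l j = (l == i)%:R.
  move=> l; have := congr1 (fun A : 'M[R]_k.+1 => A l i) HM.
  rewrite !mxE => <-; apply: eq_bigr => j _; exact: mulrC.
under eq_bigr => l _ do rewrite HMM.
rewrite (bigD1 i) //= eqxx scale1r big1 ?addr0 // => l /negbTE ->.
exact: scale0r.
Qed.

Lemma PsiPhi (R : realType) k (M Minv : 'M[R]_k.+1) : Minv *m M = 1%:M ->
  forall p, Psi Minv (Phi M p) = p.
Proof.
move=> HM p; rewrite {2}(mpolyE p) /Phi /mmap Psi_sum; apply: eq_bigr => m _.
rewrite PsiM /= PsiC mul_mpolyC; congr (_ *: _).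
rewrite /mmap1 Psi_prod mpolyXE_id; apply: eq_bigr => i _.
by rewrite PsiXn PsiL.
Qed.

Lemma quadform (S : comRingType) n (u : 'rV[S]_n) (C : 'M[S]_n) :
  (u *m C *m u^T) 0 0 = \sum_i \sum_j C i j * u 0 i * u 0 j.
Proof.
rewrite mxE; under eq_bigr => j _ do rewrite !mxE mulr_suml.
rewrite exchange_big /=; apply: eq_bigr => i _; apply: eq_bigr => j _.
by rewrite [u 0 i * _]mulrC.
Qed.

Lemma Phi_sum (R : realType) k (M : 'M[R]_k.+1) (I : Type) (r : seq I) (P : pred I) F :
  Phi M (\sum_(i <- r | P i) F i) = \sum_(i <- r | P i) Phi M (F i).
Proof. exact: raddf_sum. Qed.

Definition cpoly (R : realType) k (e : 'rV[R]_k.+1) : {mpoly R[k]} :=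
  \sum_j (- ((e 0 ord0)^-1 * e 0 (lift ord0 j))) *: 'X_[(U_(j) + U_(j))%MM].

Lemma PhiQ (R : realType) k (M B : 'M[R]_k.+1) (e : 'rV[R]_k.+1) :
  M *m B *m M^T = diag_mx e -> e 0 ord0 != 0 ->
  Phi M (quad_poly B) = (e 0 ord0)%:MP%:P * ('X^2 - (cpoly e)%:P).
Proof.
move=> HB e0.
pose fc := (polyC \o (@mpolyC k R)).
pose Yr : 'rV[{poly {mpoly R[k]}}]_k.+1 := \row_j Yv R j.
have HL : forall i, Lv M i = (Yr *m map_mx fc M) 0 i.
  by move=> i; rewrite /Lv !mxE; apply: eq_bigr => j _; rewrite !mxE mulrC.
have -> : Phi M (quad_poly B) = \sum_i \sum_j fc (B i j) * Lv M i * Lv M j.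
  rewrite /quad_poly Phi_sum; apply: eq_bigr => i _; rewrite Phi_sum; apply: eq_bigr => j _.
  by rewrite PhiZ PhiM !PhiX mulrA.
under eq_bigr => i _ do under eq_bigr => j _ do rewrite [Lv M i]HL [Lv M j]HL.
set U := Yr *m map_mx fc M.
have -> : \sum_i \sum_j fc (B i j) * U 0 i * U 0 j = (U *m map_mx fc B *m U^T) 0 0.
  by rewrite quadform; apply: eq_bigr => i _; apply: eq_bigr => j _; rewrite [map_mx _ _ _ _]mxE.
have -> : U *m map_mx fc B *m U^T = Yr *m map_mx fc (M *m B *m M^T) *m Yr^T.
  by rewrite /U trmx_mul !map_mxM map_trmx !mulmxA.
rewrite HB quadform.
have Hd : forall i, \sum_j map_mx fc (diag_mx e) i j * Yr 0 i * Yr 0 j = fc (e 0 i) * Yv R i * Yv R i.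
  move=> i; rewrite (bigD1 i) //= big1 ?addr0; first by rewrite !mxE eqxx mulr1n.
  move=> j /negbTE nij; rewrite !mxE eq_sym nij mulr0n.
  have -> : fc 0 = 0 by exact: rmorph0.
  by rewrite !mul0r.
under eq_bigr => i _ do rewrite Hd.
rewrite big_ord_recl /= /Yv unlift_none mulrBr -mulrA -expr2; congr (_ + _).
rewrite -[X in - X]rmorphM /= mul_mpolyC /cpoly scaler_sumr -polyCN -sumrN raddf_sum.
apply: eq_bigr => j _; rewrite liftK scalerA mulrN mulrA mulfV // mul1r scaleNr !opprK.
rewrite mpolyXD -mul_mpolyC.
transitivity (((e 0 (lift ord0 j))%:MP * ('X_j * 'X_j))%:P); last by [].
by rewrite !polyCM mulrA.
Qed.

Lemma Qfacts_k (R : realType) k (B M Minv : 'M[R]_k.+2) (e : 'rV[R]_k.+2) :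
  Minv *m M = 1%:M -> M *m B *m M^T = diag_mx e -> 0 < e 0 ord0 * e 0 (lift ord0 ord0) ->
  [/\ quad_poly B != 0, ~ dvQ (quad_poly B) 1 &
      forall a b, dvQ (quad_poly B) (a * b) -> dvQ (quad_poly B) a \/ dvQ (quad_poly B) b].
Proof.
move=> HM HB He.
set Q := quad_poly B.
have e0 : e 0 ord0 != 0.
  by apply: contraTneq He => ->; rewrite mul0r ltxx.
have HQ := PhiQ HB e0; rewrite -/Q in HQ.
set d := 'X^2 - (cpoly e)%:P in HQ.
set u := ((e 0 ord0)%:MP)%:P in HQ.
have u0 : u != 0 by rewrite /u polyC_eq0 mpolyC_eq0.
have d0 : d != 0 by apply: monic_neq0; apply: monicXnsubC.
have Hdiv : forall a, dvQ Q a <-> exists K, Phi M a = d * K.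
  move=> a; split.
    move=> [h ->]; exists (u * Phi M h); by rewrite PhiM HQ mulrCA mulrA.
  move=> [K HK]; exists ((e 0 ord0)^-1%:MP * Psi Minv K).
  have Hd : Psi Minv d = (e 0 ord0)^-1%:MP * Q.
    rewrite -[in RHS](PsiPhi HM Q) HQ PsiM PsiC mulrA -mpolyCM mulVf // mul1r.
    by [].
  by rewrite -(PsiPhi HM a) HK PsiM Hd mulrCA mulrA.
have Hsign : forall a0 a1 : {mpoly R[k.+1]}, a0 * a0 = a1 * a1 * cpoly e -> a1 = 0.
  apply: sign_lemma.
  rewrite oppr_lt0.
  have -> : (e 0 ord0)^-1 * e 0 (lift ord0 ord0)
          = (e 0 ord0 * e 0 (lift ord0 ord0)) * ((e 0 ord0)^-1 * (e 0 ord0)^-1).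
    by field.
  apply: mulr_gt0 => //; rewrite lt0r mulf_neq0 ?invr_eq0 //= -expr2; exact: sqr_ge0.
split.
- apply: contraNneq (mulf_neq0 u0 d0) => Q0.
  by rewrite -HQ Q0 /Phi mmap0.
- move=> /Hdiv [K HK]; apply: (@poly_not_unit _ (cpoly e)); exists K.
  by rewrite -HK Phi1.
- move=> a b /Hdiv [K HK].
  have := poly_prime Hsign (f := Phi M a) (g := Phi M b).
  rewrite -PhiM; case=> [|[Ka HKa]|[Kb HKb]]; first by exists K.
    by left; apply/Hdiv; exists Ka.
  by right; apply/Hdiv; exists Kb.
Qed.

Lemma Qfacts_N (R : realType) N (B M Minv : 'M[R]_N) (e : 'rV[R]_N) :
  (2 <= N)%N -> Minv *m M = 1%:M -> M *m B *m M^T = diag_mx e ->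
  (forall i0 i1 : 'I_N, val i0 = 0%N -> val i1 = 1%N -> 0 < e 0 i0 * e 0 i1) ->
  [/\ quad_poly B != 0, ~ dvQ (quad_poly B) 1 &
      forall a b, dvQ (quad_poly B) (a * b) -> dvQ (quad_poly B) a \/ dvQ (quad_poly B) b].
Proof.
case: N B M Minv e => [|[|k]] B M Minv e // _ HM HB He.
by apply: (Qfacts_k HM HB); apply: He.
Qed.

Lemma normal_form (R : realType) p q (B : 'M[R]_(p + q)) :
  (1 <= p)%N -> (1 <= q)%N -> (3 <= p + q)%N -> has_signature B ->
  exists (M Minv : 'M[R]_(p + q)) (e : 'rV[R]_(p + q)),
    [/\ Minv *m M = 1%:M, M *m B *m M^T = diag_mx e &
       forall i0 i1 : 'I_(p + q), val i0 = 0%N -> val i1 = 1%N -> 0 < e 0 i0 * e 0 i1].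
Proof.
move=> hp hq hn [_ [P [HPu HP]]].
have h0 : (0 < p + q)%N by apply: leq_trans hn.
have h2 : (2 < p + q)%N by [].
pose o0 : 'I_(p + q) := Ordinal h0.
pose o2 : 'I_(p + q) := Ordinal h2.
pose s : {perm 'I_(p + q)} := if (2 <= p)%N then 1%g else tperm o0 o2.
pose sg (i : 'I_(p + q)) : R := if (i < p)%N then 1 else -1.
exists (perm_mx s *m P), (invmx P *m perm_mx s^-1), (\row_j sg (s j)).
split.
- rewrite -mulmxA [perm_mx _ *m (perm_mx _ *m _)]mulmxA -perm_mxM mulVg perm_mx1 mul1mx.
  exact: mulVmx.
- rewrite trmx_mul tr_perm_mx !mulmxA -[perm_mx s *m P *m B *m P^T]mulmxA.
  rewrite -[perm_mx s *m P *m (B *m P^T)]mulmxA [P *m (B *m P^T)]mulmxA HP.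
  rewrite -col_permE -row_permE; apply/matrixP => j l.
  rewrite /std_sig !mxE (inj_eq perm_inj).
  by case: (j == l); rewrite ?mulr1n ?mulr0n.
- move=> i0 i1 v0 v1; rewrite !mxE /sg /s.
  case p2: (2 <= p)%N.
    by rewrite !perm1 v0 v1 (leq_trans _ p2) // (leq_trans _ p2) // mul1r ltr01.
  have e0 : i0 = o0 by apply: val_inj.
  rewrite e0 tpermL tpermD; last 2 first.
  - by apply/eqP => /(congr1 val); rewrite /= v1.
  - by apply/eqP => /(congr1 val); rewrite /= v1.
  have p1 : p = 1%N by apply/eqP; rewrite eqn_leq hp andbT -ltnS ltnNge p2.
  by rewrite /= v1 p1 /= mulrNN mulr1 ltr01.
Qed.

Theorem lemma3p6 (R : realType) (p q : nat) (B : 'M[R]_(p + q))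
  (w r : nat) (Delta : polymap R (p + q) w -> Prop) :
  (1 <= p)%N -> (1 <= q)%N -> (3 <= p + q)%N ->
  has_signature B ->
  (r <= w)%N ->
  is_submodule Delta ->
  (forall x : polymap R (p + q) w,
      Delta (map_mx (fun c => quad_poly B * c) x) -> Delta x) ->
  (exists M : 'M[{mpoly R[p + q]}]_(w, r),
      (forall i : 'I_r, Delta (col i M)) /\
      exists g, in_minor_ideal M g /\ g != 0) ->
  exists M : 'M[{mpoly R[p + q]}]_(w, r),
    (forall i : 'I_r, Delta (col i M)) /\
    exists g, in_minor_ideal M g /\ ~ in_Qideal (quad_poly B) g.
Proof.
move=> hp hq hn hB _ Hsub HQ Hex.
have [M [Minv [e [HM HB He]]]] := normal_form hp hq hn hB.
have [Q0 nQ1 Qp] := Qfacts_N (ltnW hn) HM HB He.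
exact: main_from_facts Q0 nQ1 Qp Hsub HQ Hex.
Qed.
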